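(* Let $S$ be a left cancellative semigroup and let $U$ be the set of regular elements of $S$. Then: (i) for all $x,y\in S$, if $xy\in U$ then $x\in U$ and $y\in U$; in particular $S\setminus U$ is either empty or an ideal of $S$; (ii) if $U$ is non-empty, then $U$ is a subsemigroup of $S$ which is a right group; (iii) if $x\in S$ and the $\mathcal{R}$-class $R_x$ of $x$ in $S$ has more than one element, then $R_x=xU$; (iv) if $U$ is non-empty, then for every $x\in S$ the set $xU$ is an $\mathcal{R}$-class of $S$ (not necessarily containing $x$).
   Context: $S$ is left cancellative if $ax=ay$ implies $x=y$ for all $a,x,y\in S$. An element $x$ is regular if $x=xzx$ for some $z\in S$. $\mathcal{R}$ is Green's relation: $x\,\mathcal{R}\,y$ iff $xS^1=yS^1$. A right zero semigroup is a semigroup $E$ with $ef=f$ for all $e,f\in E$; a right group is a semigroup isomorphic to a direct product $G\times E$ of a group $G$ and a right zero semigroup $E$. *)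

(* Defs.v *)
Section SemigroupDefs.
Context {T : Type} (mul : T -> T -> T).

Definition associative_op : Prop :=
  forall x y z, mul x (mul y z) = mul (mul x y) z.

Definition left_cancellative : Prop :=
  forall a x y, mul a x = mul a y -> x = y.

Definition regular (x : T) : Prop := exists z, x = mul (mul x z) x.

Definition in_xS1 (x w : T) : Prop := w = x \/ exists s, w = mul x s.

Definition greenR (x y : T) : Prop := forall w, in_xS1 x w <-> in_xS1 y w.

Definition ideal (I : T -> Prop) : Prop :=
  (exists z, I z) /\ forall x s, I x -> I (mul s x) /\ I (mul x s).

Definition subsemigroup (A : T -> Prop) : Prop :=
  (exists z, A z) /\ forall x y, A x -> A y -> A (mul x y).

End SemigroupDefs.

Definition is_group (G : Type) (op : G -> G -> G) : Prop :=
  exists (e : G) (inv : G -> G),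
    (forall a b c, op a (op b c) = op (op a b) c) /\
    (forall a, op e a = a /\ op a e = a) /\
    (forall a, op (inv a) a = e /\ op a (inv a) = e).

(* A (as a subsemigroup of (T, mul)) is a right group: isomorphic to G × E
   with G a group and E a right zero semigroup (e f = f), the product being
   componentwise: (g, e)(h, f) = (g h, e f) = (g h, f). *)
Definition right_group {T : Type} (mul : T -> T -> T) (A : T -> Prop) : Prop :=
  exists (G : Type) (opG : G -> G -> G) (E : Type) (phi : G * E -> T),
    is_group G opG /\
    (forall p q, phi p = phi q -> p = q) /\
    (forall t, A t <-> exists p, phi p = t) /\
    (forall g e h f, phi (opG g h, f) = mul (phi (g, e)) (phi (h, f))).

(* Main.v *)
Require Import Defs.
From Stdlib Require Import Classical ClassicalEpsilon ProofIrrelevance.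

Lemma idem_left (T : Type) (mul : T -> T -> T) (Ha : associative_op mul)
  (Hl : left_cancellative mul) f : mul f f = f -> forall s, mul f s = s.
Proof. intros Hf s. apply (Hl f). rewrite Ha, Hf. reflexivity. Qed.

Lemma reg_idem (T : Type) (mul : T -> T -> T) (Ha : associative_op mul) u :
  regular mul u -> exists z, mul (mul u z) (mul u z) = mul u z /\ u = mul (mul u z) u.
Proof.
  intros [z Hz]. exists z. split; [|exact Hz].
  rewrite Ha. rewrite <- Hz. reflexivity.
Qed.

Lemma reg_of_idem (T : Type) (mul : T -> T -> T) (Ha : associative_op mul)
  (Hl : left_cancellative mul) x a :
  mul (mul x a) (mul x a) = mul x a -> regular mul x.
Proof.
  intros Hf. exists a. symmetry. apply (idem_left T mul Ha Hl). exact Hf.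
Qed.

Lemma reg_mul (T : Type) (mul : T -> T -> T) (Ha : associative_op mul)
  (Hl : left_cancellative mul) x y :
  regular mul x -> regular mul y -> regular mul (mul x y).
Proof.
  intros Hx Hy.
  destruct (reg_idem T mul Ha x Hx) as [a [Hfa Hxa]].
  destruct (reg_idem T mul Ha y Hy) as [b [Hfb Hyb]].
  apply (reg_of_idem T mul Ha Hl _ (mul b a)).
  assert (E : mul (mul x y) (mul b a) = mul x a).
  { rewrite <- Ha. rewrite (Ha y b a). rewrite (idem_left T mul Ha Hl _ Hfb). reflexivity. }
  rewrite E. exact Hfa.
Qed.

Lemma in_trans (T : Type) (mul : T -> T -> T) (Ha : associative_op mul) x y w :
  in_xS1 mul x y -> in_xS1 mul y w -> in_xS1 mul x w.
Proof.
  intros [H1|[s H1]] [H2|[t H2]]; subst.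
  - left; reflexivity.
  - right; exists t; reflexivity.
  - right; exists s; reflexivity.
  - right; exists (mul s t). rewrite Ha. reflexivity.
Qed.

Lemma green_mutual (T : Type) (mul : T -> T -> T) (Ha : associative_op mul) x y :
  in_xS1 mul x y -> in_xS1 mul y x -> greenR mul x y.
Proof.
  intros H1 H2 w; split; intro H; eapply in_trans; eauto.
Qed.

Lemma R_lemma (T : Type) (mul : T -> T -> T) (Ha : associative_op mul)
  (Hl : left_cancellative mul) x e : mul e e = e ->
  forall y, greenR mul (mul x e) y <-> exists u, regular mul u /\ y = mul x u.
Proof.
  intros He y. split.
  - intro H.
    assert (Hy : in_xS1 mul (mul x e) y) by (apply (proj2 (H y)); left; reflexivity).
    assert (Hx : in_xS1 mul y (mul x e)) by (apply (proj1 (H (mul x e))); left; reflexivity).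
    assert (Re : regular mul e).
    { exists e. rewrite !He. reflexivity. }
    destruct Hy as [Hy|[s Hs]].
    + exists e; split; assumption.
    + destruct Hx as [Hx|[t Ht]].
      * exists e; split; [assumption| symmetry; assumption].
      * rewrite Hs in Ht. rewrite <- !Ha in Ht. apply Hl in Ht.
        rewrite (idem_left T mul Ha Hl _ He) in Ht.
        exists s. split.
        -- exists t. rewrite <- Ht. symmetry. apply (idem_left T mul Ha Hl _ He).
        -- rewrite Hs, <- Ha, (idem_left T mul Ha Hl _ He). reflexivity.
  - intros [u [Hu ->]].
    destruct (reg_idem T mul Ha u Hu) as [z [Hf Hz]].
    apply green_mutual; [assumption| |].
    + right; exists u. rewrite <- Ha, (idem_left T mul Ha Hl _ He). reflexivity.
    + right; exists (mul z e). rewrite <- Ha. rewrite (Ha u z e).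
      rewrite (idem_left T mul Ha Hl _ Hf). reflexivity.
Qed.

Lemma sig_eq_T (T : Type) (P : T -> Prop) (g h : {t : T | P t}) :
  proj1_sig g = proj1_sig h -> g = h.
Proof.
  destruct g as [g pg], h as [h ph]; simpl; intro E; subst.
  f_equal; apply proof_irrelevance.
Qed.

Lemma Gmul_ok (T : Type) (mul : T -> T -> T) (Ha : associative_op mul)
  (Hl : left_cancellative mul) e0 g h :
  regular mul g /\ mul g e0 = g -> regular mul h /\ mul h e0 = h ->
  regular mul (mul g h) /\ mul (mul g h) e0 = mul g h.
Proof.
  intros [Hg _] [Hh Hh2]. split.
  - apply reg_mul; assumption.
  - rewrite <- Ha, Hh2. reflexivity.
Qed.

Lemma Ginv_ex (T : Type) (mul : T -> T -> T) (Ha : associative_op mul)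
  (Hl : left_cancellative mul) e0 (He0 : mul e0 e0 = e0) g :
  regular mul g /\ mul g e0 = g ->
  exists a, (regular mul a /\ mul a e0 = a) /\ (mul a g = e0 /\ mul g a = e0).
Proof.
  intros [Hg Hg2].
  destruct (reg_idem T mul Ha g Hg) as [z [Hf Hz]].
  assert (E1 : mul g (mul z e0) = e0).
  { rewrite Ha. apply (idem_left T mul Ha Hl _ Hf). }
  assert (E2 : mul (mul z e0) g = e0).
  { apply (Hl g). rewrite Ha, E1, (idem_left T mul Ha Hl _ He0). symmetry; exact Hg2. }
  exists (mul z e0). split; [split|split; assumption].
  - exists g. rewrite E2. symmetry. apply (idem_left T mul Ha Hl _ He0).
  - rewrite <- Ha, He0. reflexivity.
Qed.

Lemma rg_lemma (T : Type) (mul : T -> T -> T) (Ha : associative_op mul)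
  (Hl : left_cancellative mul) :
  (exists u, regular mul u) -> right_group mul (regular mul).
Proof.
  intros [u0 Hu0].
  destruct (reg_idem T mul Ha u0 Hu0) as [z0 [He0 _]].
  set (e0 := mul u0 z0) in *.
  pose (P := fun t => regular mul t /\ mul t e0 = t).
  pose (G := {g : T | P g}).
  pose (E := {f : T | mul f f = f}).
  pose (opG := fun g h : G => exist P (mul (proj1_sig g) (proj1_sig h))
                   (Gmul_ok T mul Ha Hl e0 _ _ (proj2_sig g) (proj2_sig h))).
  pose (C := fun g : G => constructive_indefinite_description _
                   (Ginv_ex T mul Ha Hl e0 He0 _ (proj2_sig g))).
  pose (inv := fun g : G => exist P (proj1_sig (C g)) (proj1 (proj2_sig (C g)))).
  assert (Re0 : regular mul e0) by (apply (reg_of_idem T mul Ha Hl _ e0); rewrite !He0; reflexivity).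
  pose (eG := exist P e0 (conj Re0 He0)).
  exists G, opG, E, (fun p => mul (proj1_sig (fst p)) (proj1_sig (snd p))).
  split; [|split; [|split]].
  - exists eG, inv. split; [|split].
    + intros a b c. apply sig_eq_T. simpl. apply Ha.
    + intro a. split; apply sig_eq_T; simpl.
      * apply (idem_left T mul Ha Hl _ He0).
      * exact (proj2 (proj2_sig a)).
    + intro a. split; apply sig_eq_T; simpl; unfold inv; simpl;
        destruct (proj2_sig (C a)) as [_ [H1 H2]]; assumption.
  - intros [[g pg] [f pf]] [[g' pg'] [f' pf']]; simpl; intro H.
    assert (Hg : g = g').
    { assert (A1 : mul (mul g f) e0 = g).
      { rewrite <- Ha, (idem_left T mul Ha Hl f pf e0). exact (proj2 pg). }
      assert (A2 : mul (mul g' f') e0 = g').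
      { rewrite <- Ha, (idem_left T mul Ha Hl f' pf' e0). exact (proj2 pg'). }
      rewrite <- A1, <- A2, H. reflexivity. }
    subst g'. apply Hl in H. subst f'.
    f_equal; f_equal; apply proof_irrelevance.
  - intro t. split.
    + intro Ht. destruct (Ht) as [z Hz].
      assert (Hf : mul (mul z t) (mul z t) = mul z t).
      { rewrite <- Ha, (Ha t z t), <- Hz. reflexivity. }
      assert (Pg : P (mul t e0)).
      { split. apply reg_mul; assumption. rewrite <- Ha, He0. reflexivity. }
      exists (exist P _ Pg, exist (fun f => mul f f = f) _ Hf). simpl.
      rewrite <- Ha, (idem_left T mul Ha Hl _ He0), Ha. symmetry; exact Hz.
    + intros [[[g pg] [f pf]] <-]. simpl.
      apply (reg_mul T mul Ha Hl); [exact (proj1 pg)|].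
      apply (reg_of_idem T mul Ha Hl _ f). rewrite !pf. reflexivity.
  - intros [g pg] [e pe] [h ph] [f pf]. simpl.
    rewrite <- Ha, <- Ha, (Ha e h f).
    rewrite (idem_left T mul Ha Hl _ pe). reflexivity.
Qed.

Theorem mainTheorem7 (T : Type) (mul : T -> T -> T)
    (Hassoc : associative_op mul) (Hlc : left_cancellative mul) :
  let U := regular mul in
  (* (i) *)
  ((forall x y, U (mul x y) -> U x /\ U y) /\
   ((forall z, U z) \/ ideal mul (fun z => ~ U z))) /\
  (* (ii) *)
  ((exists u, U u) -> subsemigroup mul U /\ right_group mul U) /\
  (* (iii) *)
  (forall x, (exists y, greenR mul x y /\ y <> x) ->
     forall y, greenR mul x y <-> exists u, U u /\ y = mul x u) /\
  (* (iv) *)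
  ((exists u, U u) ->
     forall x, exists z, forall y, greenR mul z y <-> exists u, U u /\ y = mul x u).
Proof.
  intro U.
  assert (Hi : forall x y, U (mul x y) -> U x /\ U y).
  { intros x y Hxy. destruct (reg_idem T mul Hassoc _ Hxy) as [z [Hz _]].
    destruct Hxy as [z' Hz'].
    split.
    - apply (reg_of_idem T mul Hassoc Hlc _ (mul y z)). rewrite (Hassoc x y z). exact Hz.
    - exists (mul z' x). apply (Hlc x).
      rewrite Hz' at 1. rewrite <- !Hassoc. reflexivity. }
  split; [split|split; [|split]].
  - exact Hi.
  - destruct (classic (forall z, U z)) as [H|H]; [left; exact H| right].
    split.
    + apply not_all_ex_not in H. exact H.
    + intros x s Hx. split; intro H'; apply Hx; apply (Hi _ _ H').
  - intro Hne. split.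
    + split; [exact Hne|]. intros x y. apply reg_mul; assumption.
    + apply rg_lemma; assumption.
  - intros x [y [Hxy Hne]] w.
    assert (Hy : in_xS1 mul x y) by (apply (proj2 (Hxy y)); left; reflexivity).
    assert (Hx : in_xS1 mul y x) by (apply (proj1 (Hxy x)); left; reflexivity).
    destruct Hy as [Hy|[s Hs]]; [congruence|].
    destruct Hx as [Hx|[t Ht]]; [congruence|].
    assert (Hst : mul x (mul s t) = x) by (rewrite Hassoc, <- Hs; symmetry; exact Ht).
    assert (He : mul (mul s t) (mul s t) = mul s t).
    { apply (Hlc x). rewrite Hassoc, !Hst. reflexivity. }
    pose proof (R_lemma T mul Hassoc Hlc x _ He w) as R.
    rewrite Hst in R. exact R.
  - intros [u0 Hu0] x.
    destruct (reg_idem T mul Hassoc u0 Hu0) as [z0 [He0 _]].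
    exists (mul x (mul u0 z0)). apply R_lemma; assumption.
Qed.
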